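(* Let $T_1=(Q_1,\Sigma,\Delta,R_1,q_1^0)$ and $T_2=(Q_2,\Delta,\Omega,R_2,q_2^0)$ be top-down tree transducers, let $A$ be the domain automaton of $T_2$, and let $\hat{T}_1$ be the product construction of $T_1$ and $A$. Then $\mathcal{R}(T_1)\circ\mathcal{R}(T_2)=\mathcal{R}(\hat{T}_1)\circ\mathcal{R}(T_2)$.
   Context: A top-down tree transducer $T=(Q,\Sigma,\Delta,R,q_0)$ has finite state set $Q$, ranked input/output alphabets $\Sigma,\Delta$, initial state $q_0$, and finite rule set $R$ of rules $q(a(x_1,\dots,x_k))\to t$ with $a\in\Sigma_k$ ($\Sigma_k$ = symbols of rank $k$) and $t$ a tree over $\Delta$ whose leaves may additionally be of the form $q'(x_i)$, $q'\in Q$, $i\in[k]$; rules are used as rewrite rules in the usual way. $\mathcal{R}(T)$ is the set of pairs $(s,t)$ with $t$ a tree over $\Delta$ derivable from $q_0(s)$; $\mathcal{R}_1\circ\mathcal{R}_2=\{(s,u)\mid\exists t:(s,t)\in\mathcal{R}_1,(t,u)\in\mathcal{R}_2\}$. For $q\in Q$, $a\in\Sigma_k$, $\text{rhs}_T(q,a)$ is the set of right-hand sides of rules with left-hand side $q(a(x_1,\dots,x_k))$; for a set $\Gamma$ of right-hand sides, $\Gamma[x_i]$ is the set of $q'\in Q$ with $q'(x_i)$ occurring in some tree of $\Gamma$. Domain automaton of $T$: the top-down tree automaton (transducer over $\Sigma$ with rules of the form $p(a(x_1,\dots,x_k))\to a(p_1(x_1),\dots,p_k(x_k))$) with states all subsets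 of $Q$, initial state $\{q_0\}$, rules $S(a(x_1,\dots,x_k))\to a(S_1(x_1),\dots,S_k(x_k))$ for every $a\in\Sigma_k$, nonempty $S=\{q_1,\dots,q_n\}\subseteq Q$ and nonempty $\Gamma_j\subseteq\text{rhs}_T(q_j,a)$ ($j\in[n]$), where $S_i=\bigcup_j\Gamma_j[x_i]$, and rules $\emptyset(a(x_1,\dots,x_k))\to a(\emptyset(x_1),\dots,\emptyset(x_k))$ for all $a$. Product construction of transducers $T=(Q,\Sigma,\Delta,R,q_0)$ and $T'=(Q',\Delta,\Omega,R',q'_0)$: the transducer with states $Q\times Q'$, input $\Sigma$, output $\Omega$, initial state $(q_0,q'_0)$, and, for every rule $q(a(x_1,\dots,x_k))\to\xi$ of $T$, every $p\in Q'$ and every tree $\zeta$ derivable from $p(\xi)$ using rules of $T'$ in which the leaves of $\xi$ of the form $q''(x_i)$ are treated as unrewritable symbols and a state $p'$ applied to such a leaf stays as $p'(q''(x_i))$, the rule $(q,p)(a(x_1,\dots,x_k))\to\zeta'$, where $\zeta'$ is obtained from $\zeta$ by replacing each $p'(q''(x_i))$ by $(q'',p')(x_i)$. *)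

(* Defs.v *)
From HB Require Import structures.
From mathcomp Require Import all_boot.
From Stdlib Require Import Relations.Relation_Operators.
From Stdlib Require List.

Set Implicit Arguments.
Unset Strict Implicit.
Unset Printing Implicit Defensive.

Record ralph := RAlph { sym :> finType; rank : sym -> nat }.

Inductive tree (L : Type) : Type := Node : L -> seq (tree L) -> tree L.
Arguments Node {L} _ _.

Fixpoint tmap (L L' : Type) (f : L -> L') (t : tree L) : tree L' :=
  let: Node l cs := t in Node (f l) (map (tmap f) cs).

Fixpoint wf_tree (L : Type) (ok : L -> nat -> bool) (t : tree L) : bool :=
  let: Node l cs := t in ok l (size cs) && all (wf_tree ok) cs.

Definition ranked (S : ralph) (t : tree S) : bool :=
  wf_tree (fun a n => n == rank a) t.

(** Right-hand sides of rules: trees over Delta whose leaves may be [q(x_i)],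
    encoded as label [inr (q, i)] with 0-based variable index [i]. *)
Definition rhs (D : ralph) (Q : Type) := tree (D + Q * nat)%type.

Definition rhs_ok (D : ralph) (Q : Type) (k : nat) (l : D + Q * nat) (n : nat) : bool :=
  match l with
  | inl d => n == rank d
  | inr (_, i) => (n == 0) && (i < k)
  end.

Inductive occurs (L : Type) (x : L) : tree L -> Prop :=
| occ_here cs : occurs x (Node x cs)
| occ_sub l cs c : List.In c cs -> occurs x c -> occurs x (Node l cs).

(** Top-down tree transducer; the rule set is a set (predicate) of rules
    [q(a(x_1..x_k)) -> t]; finiteness and well-formedness are separate predicates. *)
Record tdtt (S D : ralph) := TDTT {
  state : finType;
  rule : state -> S -> rhs D state -> Prop;
  init : state }.

Definition finite_rules (S D : ralph) (T : tdtt S D) : Prop :=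
  exists l : list (state T * S * rhs D (state T)),
    forall q a t, @rule S D T q a t <-> List.In (q, a, t) l.

Definition wf_tdtt (S D : ralph) (T : tdtt S D) : Prop :=
  forall q a t, @rule S D T q a t -> wf_tree (@rhs_ok D (state T) (rank a)) t.

(** Input trees have labels in [I];
    [head] tells which input labels are (rewritable) symbols of the input
    alphabet [S]; other labels are unrewritable.  A state [q] applied to an
    input tree [s] is the leaf labelled [inr (q, s)]. *)
Section Rewriting.
Variables (S : ralph) (O Q I : Type) (head : I -> option S)
          (rl : Q -> S -> tree (O + Q * nat)%type -> Prop).

Definition sform := tree (O + Q * tree I)%type.

(** substitute x_i := nth i ss (default [d] irrelevant for well-formed rules) *)
Fixpoint subst (d : tree I) (ss : seq (tree I)) (r : tree (O + Q * nat)) : sform :=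
  match r with
  | Node (inl o) cs => Node (inl o) (map (subst d ss) cs)
  | Node (inr (q, i)) _ => Node (inr (q, nth d ss i)) [::]
  end.

Inductive step : sform -> sform -> Prop :=
| step_root q x ss a r :
    head x = Some a -> size ss = rank a -> rl q a r ->
    step (Node (inr (q, Node x ss)) [::]) (subst (Node x ss) ss r)
| step_ctx l ts1 t t' ts2 :
    step t t' ->
    step (Node l (ts1 ++ t :: ts2)) (Node l (ts1 ++ t' :: ts2)).

Definition derives : sform -> sform -> Prop := clos_refl_trans sform step.

End Rewriting.

Definition trel (S D : ralph) (T : tdtt S D) (s : tree S) (t : tree D) : Prop :=
  ranked s /\ ranked t /\
  derives (fun a : S => Some a) (@rule S D T)
    (Node (inr (init T, s)) [::]) (tmap inl t).

Definition rcomp (A B C : Type) (R1 : A -> B -> Prop) (R2 : B -> C -> Prop)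
  (a : A) (c : C) : Prop := exists b, R1 a b /\ R2 b c.

Definition dom_rule (S D : ralph) (T : tdtt S D)
  (P : {set state T}) (a : S) (r : rhs S {set state T}) : Prop :=
  (P = set0 /\
     r = Node (inl a) (mkseq (fun i => Node (inr (set0, i)) [::]) (rank a)))
  \/
  (P != set0 /\
   exists G : state T -> rhs D (state T) -> Prop,
     (forall q, q \in P -> (exists t, G q t) /\ (forall t, G q t -> @rule S D T q a t)) /\
     exists Ps : seq {set state T},
       size Ps = rank a /\
       r = Node (inl a) (mkseq (fun i => Node (inr (nth set0 Ps i, i)) [::]) (rank a)) /\
       forall i, i < rank a -> forall q',
         q' \in nth set0 Ps i <->
         exists q, q \in P /\ exists t, G q t /\ occurs (inr (q', i)) t).

Definition dom_aut (S D : ralph) (T : tdtt S D) : tdtt S S :=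
  @TDTT S S {set state T} (@dom_rule S D T) [set init T].

Definition rhs_head (D : ralph) (Q : Type) (l : D + Q * nat) : option D :=
  match l with inl d => Some d | inr _ => None end.

(** [pconv z z']: z' is obtained from z (a tree over O whose other leaves are
    p'(q''(x_i))) by replacing each p'(q''(x_i)) by (q'',p')(x_i). *)
Inductive pconv (O Q Q' D : Type) :
  tree (O + Q' * tree (D + Q * nat))%type -> tree (O + (Q * Q') * nat)%type -> Prop :=
| pc_node o cs cs' :
    List.Forall2 (@pconv O Q Q' D) cs cs' -> pconv (Node (inl o) cs) (Node (inl o) cs')
| pc_leaf p q i :
    pconv (Node (inr (p, Node (inr (q, i)) [::])) [::]) (Node (inr ((q, p), i)) [::]).

Definition prod_rule (S D O : ralph) (T : tdtt S D) (T' : tdtt D O)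
  (qp : (state T * state T')%type) (a : S) (z' : rhs O (state T * state T')%type) : Prop :=
  exists xi, @rule S D T qp.1 a xi /\
  exists z, derives (@rhs_head D (state T)) (@rule D O T')
              (Node (inr (qp.2, xi)) [::]) z /\
            pconv z z'.

Definition prod_tdtt (S D O : ralph) (T : tdtt S D) (T' : tdtt D O) : tdtt S O :=
  @TDTT S O (state T * state T')%type (@prod_rule S D O T T') (init T, init T').

(* Main.v *)
Require Import Defs.
From HB Require Import structures.
From mathcomp Require Import all_boot.
From Stdlib Require Import Relations.Relation_Operators Relations.Operators_Properties.
From Stdlib Require List ClassicalEpsilon.

Set Implicit Arguments.
Unset Strict Implicit.
Unset Printing Implicit Defensive.

Lemma tree_ind' (L : Type) (P : tree L -> Prop) :
  (forall l cs, (forall c, List.In c cs -> P c) -> P (Node l cs)) -> forall t, P t.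
Proof.
move=> H; refine (fix F t := match t with Node l cs => H l cs _ end).
refine ((fix G cs := match cs return forall c, List.In c cs -> P c with
 | [::] => fun c hin => False_ind _ hin
 | c0 :: cs0 => fun c hin => match hin with
     | or_introl e => eq_ind c0 P (F c0) c e
     | or_intror h => G cs0 c h end end) cs).
Qed.

Lemma In_nth (T : Type) (d : T) (s : seq T) i : i < size s -> List.In (nth d s i) s.
Proof. elim: s i => [|x s IH] [|i] //= h; [by left | right; exact: IH]. Qed.

Lemma all_In (T : Type) (p : pred T) s x : all p s -> List.In x s -> p x.
Proof. elim: s => [|y s IH] //= /andP [hy hs] [<-|h] //; exact: IH. Qed.

Lemma map_ext_In (A B : Type) (f g : A -> B) s :
  (forall x, List.In x s -> f x = g x) -> map f s = map g s.
Proof.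
elim: s => [|x s IH] //= h; rewrite h; last by left.
by rewrite IH // => y hy; apply: h; right.
Qed.

Lemma Forall2_size (A B : Type) (R : A -> B -> Prop) xs ys :
  List.Forall2 R xs ys -> size xs = size ys.
Proof. by elim => //= ? ? ? ? _ _ ->. Qed.

Lemma Forall2_nth (A B : Type) (R : A -> B -> Prop) x0 y0 xs ys i :
  List.Forall2 R xs ys -> i < size xs -> R (nth x0 xs i) (nth y0 ys i).
Proof.
move=> h; elim: h i => [|x y xs' ys' hxy _ IH] [|i] //= hi; exact: IH.
Qed.

Lemma Forall2_from_nth (A B : Type) (R : A -> B -> Prop) x0 y0 xs ys :
  size xs = size ys -> (forall i, i < size xs -> R (nth x0 xs i) (nth y0 ys i)) ->
  List.Forall2 R xs ys.
Proof.
elim: xs ys => [|x xs IH] [|y ys] //= [hs] h; constructor.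
- exact: (h 0).
- apply: IH => // i hi; exact: (h i.+1).
Qed.

Lemma Forall2_In (A B : Type) (R : A -> B -> Prop) xs ys x :
  List.Forall2 R xs ys -> List.In x xs -> exists y, List.In y ys /\ R x y.
Proof.
elim => [|x' y xs' ys' h _ IH] //= [<-|hin]; first by exists y; split => //; left.
by case: (IH hin) => y' [h1 h2]; exists y'; split => //; right.
Qed.

Lemma In_map_inv (A B : Type) (f : A -> B) s y :
  List.In y (map f s) -> exists x, List.In x s /\ y = f x.
Proof.
elim: s => [|x s IH] //= [<-|h]; first by exists x; split => //; left.
by case: (IH h) => x' [h1 h2]; exists x'; split => //; right.
Qed.

Lemma In_map (A B : Type) (f : A -> B) s x : List.In x s -> List.In (f x) (map f s).
Proof. elim: s => [|y s IH] //= [->|h]; [by left | right; exact: IH]. Qed.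

Lemma Forall2_map_l (A A' B : Type) (f : A -> A') (R : A' -> B -> Prop) xs ys :
  List.Forall2 R (map f xs) ys <-> List.Forall2 (fun x y => R (f x) y) xs ys.
Proof.
split.
- elim: xs ys => [|x xs IH] ys h; inversion h; subst; constructor => //; exact: IH.
- elim => //= *; by constructor.
Qed.

Lemma Forall2_map_r (A B B' : Type) (f : B -> B') (R : A -> B' -> Prop) xs ys :
  List.Forall2 R xs (map f ys) <-> List.Forall2 (fun x y => R x (f y)) xs ys.
Proof.
split.
- elim: ys xs => [|y ys IH] xs h; inversion h; subst; constructor => //; exact: IH.
- elim => //= *; by constructor.
Qed.

Lemma Forall2_impl2 (A B : Type) (R R' R'' : A -> B -> Prop) xs ys :
  (forall x y, R x y -> R' x y -> R'' x y) ->
  List.Forall2 R xs ys -> List.Forall2 R' xs ys -> List.Forall2 R'' xs ys.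
Proof.
move=> H h; elim: h => [|x y xs' ys' h1 _ IH] h'; inversion h'; subst; constructor; auto.
Qed.

Lemma Forall2_impl (A B : Type) (R R' : A -> B -> Prop) xs ys :
  (forall x y, R x y -> R' x y) -> List.Forall2 R xs ys -> List.Forall2 R' xs ys.
Proof. move=> H h; elim: h => *; constructor; auto. Qed.

Lemma Forall2_map_eq (A B C : Type) (R : A -> B -> Prop) (f : B -> C) (g : A -> C) xs ys :
  List.Forall2 R xs ys -> (forall x y, List.In x xs -> R x y -> f y = g x) ->
  map f ys = map g xs.
Proof.
elim => [|x y xs' ys' h1 _ IH] //= H; rewrite (H x y) ?IH //; last by left.
by move=> x' y' hi; apply: H; right.
Qed.

Lemma fin_choice (A B : Type) (a0 : A) (b0 : B) n (Pr : nat -> A -> B -> Prop) :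
  (forall i, i < n -> exists a b, Pr i a b) ->
  exists as_ bs, size as_ = n /\ size bs = n /\ forall i, i < n -> Pr i (nth a0 as_ i) (nth b0 bs i).
Proof.
elim: n Pr => [|n IH] Pr H; first by exists [::], [::].
case: (H 0 isT) => a [b hab].
case: (IH (fun i => Pr i.+1)) => [i hi|as_ [bs [h1 [h2 h3]]]]; first exact: H.
exists (a :: as_), (b :: bs); split; first by rewrite /= h1.
split; first by rewrite /= h2.
by case.
Qed.

Definition pb (P : Prop) : bool :=
  if ClassicalEpsilon.excluded_middle_informative P then true else false.
Lemma pbP (P : Prop) : pb P <-> P.
Proof. by rewrite /pb; case: ClassicalEpsilon.excluded_middle_informative. Qed.

Lemma tmap_comp (A B C : Type) (f : B -> C) (g : A -> B) t :
  tmap f (tmap g t) = tmap (fun x => f (g x)) t.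
Proof.
elim/tree_ind': t => l cs IH /=; congr Node; rewrite -map_comp; exact: map_ext_In.
Qed.

Lemma tmap_ext (A B : Type) (f g : A -> B) t : (forall x, f x = g x) -> tmap f t = tmap g t.
Proof.
move=> H; elim/tree_ind': t => l cs IH /=; rewrite H; congr Node; exact: map_ext_In.
Qed.

Section BSsec.
Variables (S : ralph) (O Q I : Type) (head : I -> option S)
          (rl : Q -> S -> tree (O + Q * nat)%type -> Prop).
Notation sf := (sform O Q I).

Inductive BS : sf -> sf -> Prop :=
| BS_node l cs cs' : List.Forall2 BS cs cs' -> BS (Node l cs) (Node l cs')
| BS_rw q x ss a r z : head x = Some a -> size ss = rank a -> rl q a r ->
    BS (subst (Node x ss) ss r) z -> BS (Node (inr (q, Node x ss)) [::]) z.

Lemma BS_ind' (P : sf -> sf -> Prop) :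
  (forall l cs cs', List.Forall2 BS cs cs' -> List.Forall2 P cs cs' -> P (Node l cs) (Node l cs')) ->
  (forall q x ss a r z, head x = Some a -> size ss = rank a -> rl q a r ->
     BS (subst (Node x ss) ss r) z -> P (subst (Node x ss) ss r) z ->
     P (Node (inr (q, Node x ss)) [::]) z) ->
  forall t z, BS t z -> P t z.
Proof.
move=> H1 H2; fix F 3 => t z h; case: h => [l cs cs' h | q x ss a r z' hx hs hr h].
- apply: (H1 _ _ _ h).
  exact: ((fix G cs cs' (h : List.Forall2 BS cs cs') {struct h} : List.Forall2 P cs cs' :=
    match h in List.Forall2 _ cs cs' return List.Forall2 P cs cs' with
    | List.Forall2_nil => List.Forall2_nil _
    | List.Forall2_cons x y l l' hxy hl => List.Forall2_cons _ _ (F _ _ hxy) (G _ _ hl)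
    end) cs cs' h).
- exact: (H2 _ _ _ _ _ _ hx hs hr h (F _ _ h)).
Qed.

Lemma BS_refl t : BS t t.
Proof.
elim/tree_ind': t => l cs IH; constructor.
elim: cs IH => [|c cs IHc] IH; constructor; first by apply: IH; left.
by apply: IHc => c' h; apply: IH; right.
Qed.

Lemma Forall2_cat_inv (A B : Type) (R : A -> B -> Prop) ts1 x ts2 ys :
  List.Forall2 R (ts1 ++ x :: ts2) ys ->
  exists ys1 y ys2, ys = ys1 ++ y :: ys2 /\ List.Forall2 R ts1 ys1 /\ R x y /\ List.Forall2 R ts2 ys2.
Proof.
elim: ts1 ys => [|a ts1 IH] ys /= h; inversion h; subst.
- by exists [::], y, l'.
- case: (IH _ H3) => ys1 [y0 [ys2 [-> [h1 [h2 h3]]]]].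
  exists (y :: ys1), y0, ys2; split => //; split => //; by constructor.
Qed.

Lemma Forall2_cat (A B : Type) (R : A -> B -> Prop) ts1 ys1 x y ts2 ys2 :
  List.Forall2 R ts1 ys1 -> R x y -> List.Forall2 R ts2 ys2 ->
  List.Forall2 R (ts1 ++ x :: ts2) (ys1 ++ y :: ys2).
Proof.
move=> h hxy h2; elim: h => /= [|a b l1 l2 hab _ IH]; by constructor.
Qed.

Lemma step_BS t t' z : step head rl t t' -> BS t' z -> BS t z.
Proof.
move=> h; elim: h z => [q x ss a r hx hs hr | l ts1 t0 t0' ts2 h IH] z hz.
- exact: BS_rw hx hs hr hz.
- inversion hz; subst; last by move: H0; clear; case: ts1.
  case: (Forall2_cat_inv H2) => ys1 [y [ys2 [-> [h1 [h2 h3]]]]].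
  constructor; apply: Forall2_cat => //; exact: IH.
Qed.

Lemma der_BS t z : derives head rl t z -> BS t z.
Proof.
move=> h0; apply clos_rt_rt1n in h0; elim: h0 => [x|x y z' h _ IH]; first exact: BS_refl.
exact: step_BS h IH.
Qed.

Lemma der_ctx l ts1 t t' ts2 : derives head rl t t' ->
  derives head rl (Node l (ts1 ++ t :: ts2)) (Node l (ts1 ++ t' :: ts2)).
Proof.
elim => [x y h|x|x y z' _ IH1 _ IH2].
- by apply: rt_step; constructor.
- exact: rt_refl.
- exact: rt_trans IH1 IH2.
Qed.

Lemma der_Forall2 l cs cs' ts1 : List.Forall2 (derives head rl) cs cs' ->
  derives head rl (Node l (ts1 ++ cs)) (Node l (ts1 ++ cs')).
Proof.
move=> h; elim: h ts1 => [|c c' cs0 cs0' hc _ IH] ts1; first exact: rt_refl.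
apply: rt_trans (der_ctx l ts1 cs0 hc) _.
by rewrite -!cat_rcons; apply: IH.
Qed.

Lemma BS_der t z : BS t z -> derives head rl t z.
Proof.
elim/BS_ind' => [l cs cs' _ h | q x ss a r z' hx hs hr _ IH].
- exact: (der_Forall2 l [::] h).
- eapply rt_trans; last exact IH.
  apply: rt_step; exact: (step_root hx hs hr).
Qed.

Lemma BS_leaf_inv q x ss (u : tree O) :
  BS (Node (inr (q, Node x ss)) [::]) (tmap inl u) ->
  exists a r, head x = Some a /\ size ss = rank a /\ rl q a r /\
              BS (subst (Node x ss) ss r) (tmap inl u).
Proof.
case: u => o us h; inversion h; subst; by exists a, r.
Qed.

Lemma BS_inl_inv o cs (u : tree O) :
  BS (Node (inl o) cs) (tmap inl u) ->
  exists us, u = Node o us /\ List.Forall2 BS cs (map (tmap inl) us).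
Proof.
case: u => o' us h; inversion h; subst; by exists us.
Qed.

Lemma subst_occ (ok : O + Q * nat -> nat -> bool)
  (hok : forall q i n, ok (inr (q, i)) n -> n = 0) q' i r d ss (u : tree O) :
  occurs (inr (q', i)) r -> wf_tree ok r -> BS (subst d ss r) (tmap inl u) ->
  exists u' : tree O, BS (Node (inr (q', nth d ss i)) [::]) (tmap inl u').
Proof.
move=> ho; elim: ho u => [cs|l cs c hin hc IH] u /=; first by exists u.
case: l => [o|[q0 j]] /andP [hl hall].
- move=> /BS_inl_inv [us [_ hF]].
  case: (Forall2_In hF (In_map (subst d ss) hin)) => y [hy hb].
  case: (In_map_inv hy) => uc [_ ey]; subst y.
  exact: (IH uc (all_In hall hin) hb).
- by move: (hok _ _ _ hl) hin; clear; case: cs.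
Qed.

End BSsec.

Definition lmap (O X Q Q' : Type) (f : Q' -> Q) (l : O + Q' * X) : O + Q * X :=
  match l with inl o => inl o | inr (q, x) => inr (f q, x) end.

Lemma subst_lmap (O Q Q' I : Type) (f : Q' -> Q) (d : tree I) ss (r : tree (O + Q' * nat)) :
  tmap (lmap f) (subst d ss r) = subst d ss (tmap (lmap f) r).
Proof.
elim/tree_ind': r => [[o|[q i]] cs IH] //=.
congr Node; rewrite -!map_comp; exact: map_ext_In.
Qed.

Lemma subst_inl (O Q I : Type) (d : tree I) ss (o : O) (cs : seq (tree (O + Q * nat))) :
  subst d ss (Node (inl o) cs) = Node (inl o) (map (subst d ss) cs).
Proof. by []. Qed.

Section Main.
Variables (S D O : ralph) (T1 : tdtt S D) (T2 : tdtt D O).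
Hypothesis wf1 : wf_tdtt T1.
Hypothesis wf2 : wf_tdtt T2.
Notation Q1 := (state T1).
Notation Q2 := (state T2).
Notation A := (dom_aut T2).
Notation Th := (prod_tdtt T1 (dom_aut T2)).
Notation BS1 := (@BS S D Q1 S (fun a : S => Some a) (@rule S D T1)).
Notation BS2 := (@BS D O Q2 D (fun a : D => Some a) (@rule D O T2)).
Notation BSh := (@BS S D (Q1 * {set Q2})%type S (fun a : S => Some a) (@rule S D Th)).
Notation BSA := (@BS D D {set Q2} (D + Q1 * nat)%type (@rhs_head D Q1) (@rule D D A)).

Inductive acc : {set Q2} -> tree D -> Prop :=
| acc_intro P d ts Ps : size ts = rank d -> size Ps = rank d ->
   @dom_rule D O T2 P d (Node (inl d) (mkseq (fun i => Node (inr (nth set0 Ps i, i)) [::]) (rank d))) ->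
   (forall i, i < rank d -> acc (nth set0 Ps i) (nth (Node d [::]) ts i)) -> acc P (Node d ts).

Lemma dom_acc t : ranked t -> forall P : {set Q2},
  (forall q, q \in P -> exists u : tree O, BS2 (Node (inr (q, t)) [::]) (tmap inl u)) -> acc P t.
Proof.
elim/tree_ind': t => d ts IH /= /andP [/eqP hsz hall] P hP.
have IH' : forall i, i < rank d -> forall P' : {set Q2}, (forall q, q \in P' -> exists u : tree O,
    BS2 (Node (inr (q, nth (Node d [::]) ts i)) [::]) (tmap inl u)) -> acc P' (nth (Node d [::]) ts i).
  move=> i hi P' hP'; apply: IH => //.
  - by apply: In_nth; rewrite hsz.
  - by apply: (all_In hall); apply: In_nth; rewrite hsz.
case: (boolP (P == set0)) => [/eqP P0 | Pn0].
- apply: (@acc_intro P d ts (nseq (rank d) set0)) => //.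
  + by rewrite size_nseq.
  + left; split => //; congr Node; apply: eq_mkseq => i; rewrite nth_nseq; by case: ifP.
  + move=> i hi; rewrite nth_nseq hi; apply: IH' => // q; by rewrite in_set0.
- pose G := fun q r => q \in P /\ @rule D O T2 q d r /\
     exists u : tree O, BS2 (subst (Node d ts) ts r) (tmap inl u).
  pose Ps := mkseq (fun i => [set q' | pb (exists q, q \in P /\ exists r, G q r /\
                      occurs (inr (q', i)) r)]) (rank d).
  apply: (@acc_intro P d ts Ps) => //.
  + by rewrite size_mkseq.
  + right; split => //; exists G; split.
    * move=> q hq; split => [|r [_ [hr _]] //].
      have [u hu] := hP q hq.
      have [a [r [ha [_ [hr hb]]]]] := BS_leaf_inv hu.
      move: ha => /= [ea]; subst a.
      by exists r; split => //; split => //; exists u.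
    * exists Ps; split; first by rewrite size_mkseq.
      split => // i hi q'; rewrite nth_mkseq // inE; exact: pbP.
  + move=> i hi; rewrite nth_mkseq //; apply: IH' => // q'.
    rewrite inE => /pbP [q [hq [r [[_ [hr [u hb]]] ho]]]].
    have hw : wf_tree (@rhs_ok O Q2 (rank d)) r := wf2 hr.
    have hok : forall (q0 : Q2) i0 n, @rhs_ok O Q2 (rank d) (inr (q0, i0)) n -> n = 0.
      by move=> q0 i0 n /= /andP [/eqP -> _].
    case: (subst_occ hok ho hw hb) => u' hu'.
    exists u'; by rewrite (set_nth_default (Node d ts)) // hsz.
Qed.

Inductive ann : tree (D + (Q1 * {set Q2}) * tree S) -> tree D -> Prop :=
| ann_node o cs ts : List.Forall2 ann cs ts -> ann (Node (inl o) cs) (Node o ts)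
| ann_leaf q P s t : acc P t -> ann (Node (inr ((q, P), s)) [::]) t.

Lemma prod_sub k (d0 : tree S) (ss : seq (tree S)) (r : rhs D Q1) :
  wf_tree (rhs_ok k) r -> forall (t : tree D) (P : {set Q2}), acc P t ->
  BS1 (subst d0 ss r) (tmap inl t) ->
  exists (z : sform D {set Q2} (D + Q1 * nat)%type) (z' : tree (D + (Q1 * {set Q2}) * nat)%type),
    BSA (Node (inr (P, r)) [::]) z /\ pconv z z' /\
    tmap (lmap fst) z' = r /\ ann (subst d0 ss z') t.
Proof.
elim/tree_ind': r => [[o|[q'' i]] rs IH] /= /andP [hl hall] t P hacc hbs.
- move/eqP: hl => hl.
  case: (BS_inl_inv hbs) => ts [et hF]; subst t.
  inversion hacc; subst.
  rename H1 into hts; rename H2 into hPs; rename H4 into hrule; rename H5 into hch.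
  have := @fin_choice _ _ (Node (inl o) [::]) (Node (inl o) [::]) (rank o)
     (fun i z z' => BSA (Node (inr (nth set0 Ps i, nth (Node (inl o) [::]) rs i)) [::]) z /\
        pconv z z' /\ tmap (lmap fst) z' = nth (Node (inl o) [::]) rs i /\
        ann (subst d0 ss z') (nth (Node o [::]) ts i)).
  case=> [i hi | zs [z's [hzs [hz's hP]]]].
  + apply: IH.
    * by apply: In_nth; rewrite hl.
    * by apply: (all_In hall); apply: In_nth; rewrite hl.
    * exact: hch.
    * have h := Forall2_nth (subst d0 ss (Node (inl o) [::])) (tmap inl (Node o [::])) (i := i) hF.
      rewrite size_map hl in h; have h' := h hi.
      by rewrite (nth_map (Node (inl o) [::])) ?hl // (nth_map (Node o [::])) ?hts // in h'.
  + exists (Node (inl o) zs), (Node (inl o) z's).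
    split; [|split; [|split]].
    * apply: (@BS_rw _ _ _ _ _ _ P (inl o) rs o _ _ erefl hl hrule).
      rewrite subst_inl; apply: BS_node.
      apply: (Forall2_from_nth (x0 := Node (inl o) [::]) (y0 := Node (inl o) [::])).
        by rewrite size_map size_mkseq hzs.
      move=> j; rewrite size_map size_mkseq => hj.
      rewrite (nth_map (Node (inr (set0, 0)) [::])) ?size_mkseq // nth_mkseq //=.
      rewrite (set_nth_default (Node (inl o) [::])) ?hl //.
      exact: (hP j hj).1.
    * constructor.
      apply: (Forall2_from_nth (x0 := Node (inl o) [::]) (y0 := Node (inl o) [::])).
        by rewrite hzs hz's.
      move=> j; rewrite hzs => hj; exact: (hP j hj).2.1.
    * rewrite /=; congr Node.
      apply: (eq_from_nth (x0 := Node (inl o) [::])); first by rewrite size_map hz's hl.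
      move=> j; rewrite size_map hz's => hj.
      rewrite (nth_map (Node (inl o) [::])) ?hz's //; exact: (hP j hj).2.2.1.
    * rewrite subst_inl; apply: ann_node.
      apply: (Forall2_from_nth (x0 := subst d0 ss (Node (inl o) [::])) (y0 := Node o [::])).
        by rewrite size_map hz's hts.
      move=> j; rewrite size_map hz's => hj.
      rewrite (nth_map (Node (inl o) [::])) ?hz's //; exact: (hP j hj).2.2.2.
- move: hl; case: rs IH hall => // IH hall _.
  exists (Node (inr (P, Node (inr (q'', i)) [::])) [::]), (Node (inr ((q'', P), i)) [::]).
  split; first exact: BS_refl.
  split; first exact: pc_leaf.
  split => //; exact: ann_leaf.
Qed.


Lemma prod_main X Y : BS1 X Y -> forall t : tree D, Y = tmap inl t ->
  forall Xh : tree (D + (Q1 * {set Q2}) * tree S)%type,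
  tmap (lmap fst) Xh = X -> ann Xh t -> BSh Xh (tmap inl t).
Proof.
move=> h; elim/BS_ind': X Y / h => [l cs cs' _ IHF | q x ss a r z hx hs hr hb IH] t eY Xh eX hann.
- case: t eY hann => o ts [el ecs] hann; subst l cs'.
  case: Xh eX hann => lh csh [elh ecsh]; subst cs.
  case: lh elh => [o'|[[q P] s]] //= [eo]; subst o'.
  move=> hann; inversion hann; subst.
  apply: BS_node; apply/Forall2_map_r.
  move: IHF => /Forall2_map_l /Forall2_map_r IHF.
  apply: (Forall2_impl2 _ IHF H0) => x y hp ha; exact: hp y erefl x erefl ha.
- move: hx => /= [ea]; subst a.
  subst z.
  case: Xh eX hann => lh csh; case: lh => [o|[[q0 P] s]] /=; first by case.
  case=> eq0 es ecsh; subst q0 s; case: csh ecsh => // _ hann.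
  inversion hann; subst.
  have hw : wf_tree (rhs_ok (rank x)) r := wf1 hr.
  have [zz [z' [hA [hpc [hf hann']]]]] := prod_sub hw H3 hb.
  apply: (@BS_rw _ _ _ _ _ _ (q, P) x ss x z' _ erefl hs).
  - exists r; split => //; exists zz; split => //; exact: BS_der hA.
  - apply: IH => //; by rewrite subst_lmap hf.
Qed.

Fixpoint erase (t : tree (D + {set Q2} * tree (D + Q1 * nat))%type) : tree (D + Q1 * nat)%type :=
  match t with
  | Node (inl d) cs => Node (inl d) (map erase cs)
  | Node (inr (_, s)) _ => s
  end.

Lemma dom_rule_shape (P : {set Q2}) a r : @dom_rule D O T2 P a r ->
  exists f : nat -> {set Q2}, r = Node (inl a) (mkseq (fun i => Node (inr (f i, i)) [::]) (rank a)).
Proof.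
case => [[_ ->] | [_ [G [_ [Ps [_ [-> _]]]]]]]; eexists; reflexivity.
Qed.

Lemma erase_step X Y : step (@rhs_head D Q1) (@rule D D A) X Y -> erase X = erase Y.
Proof.
elim => [q x ss a r hx hs hr | l ts1 t t' ts2 _ IH].
- case: x hx => [o|[q1 n]] //= [eo]; subst o.
  have [f ->] := dom_rule_shape hr.
  rewrite subst_inl /=; congr Node.
  rewrite -map_comp /mkseq -map_comp.
  rewrite -{1}(mkseq_nth (Node (inl a) ss) ss) /mkseq hs.
  by apply: eq_map => i.
- case: l => [o|[p s]] //=; by rewrite !map_cat /= IH.
Qed.

Lemma erase_der X Y : derives (@rhs_head D Q1) (@rule D D A) X Y -> erase X = erase Y.
Proof.
elim => [x y h|x|x y z _ IH1 _ IH2] //; [exact: erase_step | congruence].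
Qed.

Lemma pconv_erase z (z' : tree (D + (Q1 * {set Q2}) * nat)%type) :
  pconv z z' -> tmap (lmap fst) z' = erase z.
Proof.
elim/tree_ind': z z' => l cs IH z' h; inversion h; subst => //=.
congr Node; apply: (Forall2_map_eq H2) => x y hx hxy; exact: IH.
Qed.

Lemma back X Y : BSh X Y -> BS1 (tmap (lmap fst) X) (tmap (lmap fst) Y).
Proof.
elim/BS_ind' => [l cs cs' _ IHF | q x ss a z' z hx hs hr _ IH].
- apply: BS_node; apply/Forall2_map_l/Forall2_map_r; exact: IHF.
- case: hr => xi [hxi [zz [hd hpc]]].
  have e : tmap (lmap fst) z' = xi by rewrite (pconv_erase hpc) -(erase_der hd).
  apply: (@BS_rw _ _ _ _ _ _ q.1 x ss a xi _ hx hs hxi).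
  by rewrite -e -subst_lmap.
Qed.

End Main.

Theorem lemma3 (S D O : ralph) (T1 : tdtt S D) (T2 : tdtt D O) :
  finite_rules T1 -> wf_tdtt T1 -> finite_rules T2 -> wf_tdtt T2 ->
  forall (s : tree S) (u : tree O),
    rcomp (trel T1) (trel T2) s u <->
    rcomp (trel (prod_tdtt T1 (dom_aut T2))) (trel T2) s u.
Proof.
move=> _ wf1 _ wf2 s u; split.
- case=> t [[rs [rt d1]] h2]; exists t; split => //.
  case: (h2) => _ [ru d2].
  split => //; split => //.
  apply: BS_der.
  apply: (prod_main wf1 (der_BS d1) erefl (Xh := Node (inr ((init T1, [set init T2]), s)) [::])) => //.
  apply: ann_leaf; apply: (dom_acc wf2 rt) => q; rewrite inE => /eqP ->.
  by exists u; exact: der_BS d2.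
- case=> t [[rs [rt d1]] h2]; exists t; split => //.
  split => //; split => //.
  have h := back (der_BS d1).
  rewrite /= tmap_comp (@tmap_ext _ _ _ inl) // in h.
  exact: BS_der h.
Qed.
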